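(* Let $\mathfrak{A}=(S_\Omega,S_{\mathcal E},\Omega,\mathcal E,B,u)$ be an accessible GPT fragment, and let $H_\Omega:S_\Omega\to\mathbb R^n$ and $H_{\mathcal E}:S_{\mathcal E}^*\to\mathbb R^m$ be its facet maps. Then $\mathfrak A$ admits a simplicial-cone embedding if and only if there exists a real $m\times n$ matrix $\sigma$ with all entries nonnegative such that $$B(w,v)=H_{\mathcal E}(w)^T\,\sigma\,H_\Omega(v)\qquad\text{for all } w\in S_{\mathcal E}^*,\ v\in S_\Omega .$$ In the quantum case ($S_\Omega,S_{\mathcal E}$ subspaces of the Hermitian operators on a finite-dimensional Hilbert space $\mathcal H$, spanned respectively by a finite set $\Omega$ of positive semidefinite operators and a finite set $\mathcal E$ of operators $0\le E\le \mathbb 1$, with effects acting by the trace pairing and $B(w,v)=\mathrm{tr}(wv)$), this condition reads $I_{\mathcal E}^T I_\Omega=H_{\mathcal E}^T\sigma H_\Omega$ in matrix form, where $I_\Omega,I_{\mathcal E}$ are the inclusion maps of $S_\Omega,S_{\mathcal E}$ into the space of Hermitian operators (expressed in bases orthonormal for the Hilbert–Schmidt inner product).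
   Context: An accessible GPT fragment $\mathfrak A=(S_\Omega,S_{\mathcal E},\Omega,\mathcal E,B,u)$ consists of: finite-dimensional real vector spaces $S_\Omega$ and $S_{\mathcal E}$; a set $\Omega\subset S_\Omega$ of states which spans $S_\Omega$; a set $\mathcal E\subset S_{\mathcal E}^*$ of effects which spans $S_{\mathcal E}^*$; a bilinear form $B:S_{\mathcal E}^*\times S_\Omega\to\mathbb R$ (the probability rule, the probability of effect $e$ on state $s$ being $B(e,s)$); and a unit effect $u\in\mathcal E$. The convex hulls of $\Omega$ and of $\mathcal E$ are assumed to have finitely many extreme points. $\mathrm{Cone}[\Omega]=\{\sum_\alpha r_\alpha s_\alpha: s_\alpha\in\Omega, r_\alpha\ge0\}$, and similarly $\mathrm{Cone}[\mathcal E]$; these are polyhedral cones. The dual cone $\mathrm{Cone}[\Omega]^*=\{h\in S_\Omega^*: h(v)\ge 0\ \forall v\in\mathrm{Cone}[\Omega]\}$ and $\mathrm{Cone}[\mathcal E]^*=\{g\in S_{\mathcal E}: w(g)\ge0\ \forall w\in\mathrm{Cone}[\mathcal E]\}$ (identifying $S_{\mathcal E}^{**}=S_{\mathcal E}$). Facet maps: let $h_1,\dots,h_n\in S_\Omega^*$ be one representative of each extreme ray of $\mathrm{Cone}[\Omega]^*$ (equivalently, the facet inequalities of $\mathrm{Cone}[\Omega]$), and define $H_\Omega(v)=(h_1(v),\dots,h_n(v))^T$; let $g_1,\dots,g_m\in S_{\mathcal E}$ be one representative of each extreme ray of $\mathrm{Cone}[\mathcal E]^*$, and define $H_{\mathcal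 E}(w)=(w(g_1),\dots,w(g_m))^T$. Thus $H_\Omega(v)\ge_e0$ iff $v\in\mathrm{Cone}[\Omega]$ and $H_{\mathcal E}(w)\ge_e 0$ iff $w\in\mathrm{Cone}[\mathcal E]$, where $\ge_e$ denotes entrywise nonnegativity. A simplicial-cone embedding of $\mathfrak A$ is a finite set $\Lambda$ together with linear maps $\tau_\Omega:S_\Omega\to\mathbb R^\Lambda$ and $\tau_{\mathcal E}:S_{\mathcal E}^*\to\mathbb R^\Lambda$ such that $\tau_\Omega(s)\ge_e 0$ for all $s\in\Omega$, $\tau_{\mathcal E}(e)\ge_e0$ for all $e\in\mathcal E$, and $B(w,v)=\tau_{\mathcal E}(w)\cdot\tau_\Omega(v)$ (standard dot product on $\mathbb R^\Lambda$) for all $w\in S_{\mathcal E}^*$, $v\in S_\Omega$. A simplex embedding is a simplicial-cone embedding which additionally satisfies $\tau_{\mathcal E}(u)=(1,1,\dots,1)$. (A scenario is called classically explainable when it admits a simplex embedding.) *)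

(* Defs.v *)
From HB Require Import structures.
From mathcomp Require Import all_boot all_order all_algebra.
From mathcomp Require Import reals.
Set Implicit Arguments. Unset Strict Implicit. Unset Printing Implicit Defensive.
Import Order.TTheory GRing.Theory Num.Theory.
Local Open Scope ring_scope.

(* Coordinates: a finite-dimensional real vector space of dimension d is
   represented by column vectors 'cV[R]_d; its dual by row vectors 'rV[R]_d,
   with the pairing h(v) = (h *m v) 0 0.
   S_Omega = 'cV_dO, S_E^* = 'cV_dE, S_E = S_E^** = 'rV_dE.
   A bilinear form B : S_E^* x S_Omega -> R is a matrix 'M_(dE,dO). *)

Section Defs.
Variable R : realType.

Definition bil {p q : nat} (B : 'M[R]_(p, q)) (w : 'cV[R]_p) (v : 'cV[R]_q) : R :=
  (w^T *m B *m v) 0 0.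

Definition pairing {d : nat} (h : 'rV[R]_d) (v : 'cV[R]_d) : R := (h *m v) 0 0.

Definition spans {d : nat} (S : 'cV[R]_d -> Prop) : Prop :=
  forall v : 'cV[R]_d, exists (k : nat) (c : 'I_k -> R) (s : 'I_k -> 'cV[R]_d),
    (forall i, S (s i)) /\ v = \sum_(i < k) c i *: s i.

Definition in_cone {d : nat} (S : 'cV[R]_d -> Prop) (v : 'cV[R]_d) : Prop :=
  exists (k : nat) (c : 'I_k -> R) (s : 'I_k -> 'cV[R]_d),
    (forall i, 0 <= c i) /\ (forall i, S (s i)) /\ v = \sum_(i < k) c i *: s i.

Definition in_conv {d : nat} (S : 'cV[R]_d -> Prop) (v : 'cV[R]_d) : Prop :=
  exists (k : nat) (c : 'I_k -> R) (s : 'I_k -> 'cV[R]_d),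
    (forall i, 0 <= c i) /\ \sum_(i < k) c i = 1 /\
    (forall i, S (s i)) /\ v = \sum_(i < k) c i *: s i.

Definition extreme_point {d : nat} (C : 'cV[R]_d -> Prop) (x : 'cV[R]_d) : Prop :=
  C x /\ forall (y z : 'cV[R]_d) (t : R), C y -> C z -> 0 < t -> t < 1 ->
    x = t *: y + (1 - t) *: z -> y = x /\ z = x.

Definition finitely_many_extreme_points {d : nat} (S : 'cV[R]_d -> Prop) : Prop :=
  exists l : seq 'cV[R]_d, forall x, extreme_point (in_conv S) x -> x \in l.

Definition in_dual_cone {d : nat} (S : 'cV[R]_d -> Prop) (h : 'rV[R]_d) : Prop :=
  forall v, in_cone S v -> 0 <= pairing h v.

Definition extreme_ray_dual {d : nat} (S : 'cV[R]_d -> Prop) (h : 'rV[R]_d) : Prop :=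
  in_dual_cone S h /\ h != 0 /\
  forall a b, in_dual_cone S a -> in_dual_cone S b -> h = a + b ->
    exists alpha beta : R, 0 <= alpha /\ 0 <= beta /\ a = alpha *: h /\ b = beta *: h.

(* H (with rows h_1,...,h_n) is a facet map of Cone[S]: exactly one
   representative of each extreme ray of Cone[S]^*.  H(v) = H *m v. *)
Definition facet_map {d n : nat} (S : 'cV[R]_d -> Prop) (H : 'M[R]_(n, d)) : Prop :=
  (forall i, extreme_ray_dual S (row i H)) /\
  (forall i j, i != j -> ~ exists c : R, 0 < c /\ row i H = c *: row j H) /\
  (forall h, extreme_ray_dual S h -> exists i (c : R), 0 < c /\ h = c *: row i H).

Definition accessible_fragment {dO dE : nat}
    (Om : 'cV[R]_dO -> Prop) (Ef : 'cV[R]_dE -> Prop)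
    (B : 'M[R]_(dE, dO)) (u : 'cV[R]_dE) : Prop :=
  spans Om /\ spans Ef /\ Ef u /\
  finitely_many_extreme_points Om /\ finitely_many_extreme_points Ef.

(* simplicial-cone embedding: Lambda = 'I_k, linear maps as matrices *)
Definition simplicial_cone_embedding {dO dE : nat}
    (Om : 'cV[R]_dO -> Prop) (Ef : 'cV[R]_dE -> Prop) (B : 'M[R]_(dE, dO)) : Prop :=
  exists (k : nat) (tO : 'M[R]_(k, dO)) (tE : 'M[R]_(k, dE)),
    (forall s, Om s -> forall l, 0 <= (tO *m s) l 0) /\
    (forall e, Ef e -> forall l, 0 <= (tE *m e) l 0) /\
    (forall w v, bil B w v = \sum_(l < k) (tE *m w) l 0 * (tO *m v) l 0).

End Defs.

(* Main.v *)
Require Import Defs.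
From HB Require Import structures.
From mathcomp Require Import all_boot all_order all_algebra.
From mathcomp Require Import reals boolp classical_sets.
From mathcomp Require Import ring lra.
Set Implicit Arguments. Unset Strict Implicit. Unset Printing Implicit Defensive.
Import Order.TTheory GRing.Theory Num.Theory.
Local Open Scope ring_scope.

Lemma pairingD (R : realType) d (a b : 'rV[R]_d) v :
  pairing (a + b) v = pairing a v + pairing b v.
Proof. by rewrite /pairing mulmxDl mxE. Qed.

Lemma pairingZ (R : realType) d (c : R) (a : 'rV[R]_d) v :
  pairing (c *: a) v = c * pairing a v.
Proof. by rewrite /pairing -scalemxAl mxE. Qed.

Lemma pairingN (R : realType) d (a : 'rV[R]_d) v :
  pairing (- a) v = - pairing a v.
Proof. by rewrite /pairing mulNmx mxE. Qed.

Lemma pairingB (R : realType) d (a b : 'rV[R]_d) v :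
  pairing (a - b) v = pairing a v - pairing b v.
Proof. by rewrite pairingD pairingN. Qed.

Lemma pairing0 (R : realType) d (v : 'cV[R]_d) : pairing 0 v = 0.
Proof. by rewrite /pairing mul0mx mxE. Qed.

Lemma pairing_sumr (R : realType) d (h : 'rV[R]_d) k (c : 'I_k -> R) s :
  pairing h (\sum_(i < k) c i *: s i) = \sum_(i < k) c i * pairing h (s i).
Proof.
rewrite /pairing mulmx_sumr summxE; apply: eq_bigr => i _.
by rewrite -scalemxAr mxE.
Qed.

Lemma in_cone1 (R : realType) d (S : 'cV[R]_d -> Prop) s : S s -> in_cone S s.
Proof.
move=> Ss; exists 1%N, (fun _ => 1), (fun _ => s); split => //; split => //.
by rewrite big_ord1 scale1r.
Qed.

Lemma K_gen (R : realType) d (S : 'cV[R]_d -> Prop) h :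
  (forall s, S s -> 0 <= pairing h s) -> in_dual_cone S h.
Proof.
move=> H v; rewrite /in_cone => -[k [c [s [c0 [Ss ->]]]]]; rewrite pairing_sumr.
by apply: sumr_ge0 => i _; exact: mulr_ge0 (c0 i) (H _ (Ss i)).
Qed.

Lemma K0 (R : realType) d (S : 'cV[R]_d -> Prop) : in_dual_cone S 0.
Proof. by rewrite /in_dual_cone => v _; rewrite pairing0. Qed.

Lemma KD (R : realType) d (S : 'cV[R]_d -> Prop) a b :
  in_dual_cone S a -> in_dual_cone S b -> in_dual_cone S (a + b).
Proof. by rewrite /in_dual_cone => Ka Kb v Cv; rewrite pairingD addr_ge0 // ?Ka ?Kb. Qed.

Lemma KZ (R : realType) d (S : 'cV[R]_d -> Prop) (c : R) a :
  0 <= c -> in_dual_cone S a -> in_dual_cone S (c *: a).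
Proof. by rewrite /in_dual_cone => c0 Ka v Cv; rewrite pairingZ mulr_ge0 // Ka. Qed.

Definition Fm (R : realType) d (S : 'cV[R]_d -> Prop) (h x : 'rV[R]_d) :=
  exists c : R, 0 < c /\ in_dual_cone S (c *: h + x) /\ in_dual_cone S (c *: h - x).

Lemma Fm0 (R : realType) d (S : 'cV[R]_d -> Prop) h :
  in_dual_cone S h -> Fm S h 0.
Proof. by move=> Kh; exists 1; rewrite subr0 addr0 scale1r. Qed.

Lemma Fmh (R : realType) d (S : 'cV[R]_d -> Prop) h :
  in_dual_cone S h -> Fm S h h.
Proof. by move=> Kh; exists 1; rewrite scale1r subrr; split => //; split; [exact: KD|exact: K0]. Qed.

Lemma FmN (R : realType) d (S : 'cV[R]_d -> Prop) h x :
  Fm S h x -> Fm S h (- x).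
Proof. by case=> c [c0 [K1 K2]]; exists c; rewrite opprK. Qed.

Lemma FmD (R : realType) d (S : 'cV[R]_d -> Prop) h x y :
  Fm S h x -> Fm S h y -> Fm S h (x + y).
Proof.
case=> c [c0 [K1 K2]] [e [e0 [K3 K4]]]; exists (c + e); split; first exact: addr_gt0.
have -> : (c + e) *: h + (x + y) = (c *: h + x) + (e *: h + y).
  by apply/matrixP => i j; rewrite !mxE; ring.
have -> : (c + e) *: h - (x + y) = (c *: h - x) + (e *: h - y).
  by apply/matrixP => i j; rewrite !mxE; ring.
by split; apply: KD.
Qed.

Lemma FmZ (R : realType) d (S : 'cV[R]_d -> Prop) h (a : R) x :
  in_dual_cone S h -> Fm S h x -> Fm S h (a *: x).
Proof.
move=> Kh [c [c0 [K1 K2]]]; exists ((`|a| + 1) * c); split.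
  by apply: mulr_gt0 => //; apply: ltr_wpDl.
have [a0|a0] := leP 0 a.
  have -> : (`|a| + 1) * c *: h + a *: x = a *: (c *: h + x) + c *: h.
    by apply/matrixP => i j; rewrite !mxE ger0_norm //; ring.
  have -> : (`|a| + 1) * c *: h - a *: x = a *: (c *: h - x) + c *: h.
    by apply/matrixP => i j; rewrite !mxE ger0_norm //; ring.
  by split; apply: KD; apply: KZ => //; exact: ltW.
have -> : (`|a| + 1) * c *: h + a *: x = (- a) *: (c *: h - x) + c *: h.
  by apply/matrixP => i j; rewrite !mxE ltr0_norm //; ring.
have -> : (`|a| + 1) * c *: h - a *: x = (- a) *: (c *: h + x) + c *: h.
  by apply/matrixP => i j; rewrite !mxE ltr0_norm //; ring.
have na : 0 <= - a by rewrite oppr_ge0 ltW.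
by split; apply: KD; apply: KZ => //; exact: ltW.
Qed.

Lemma Fm_sub (R : realType) d (S : 'cV[R]_d -> Prop) h p (M : 'M[R]_(p, d)) y :
  in_dual_cone S h -> (forall i, Fm S h (row i M)) -> (y <= M)%MS -> Fm S h y.
Proof.
move=> Kh HM /submxP [v ->]; rewrite mulmx_sum_row.
apply: (big_ind (Fm S h)); [exact: Fm0 | exact: FmD |].
by move=> i _; apply: FmZ.
Qed.
Lemma fam_seq (R : realType) d (S : 'cV[R]_d -> Prop) (l : seq 'cV[R]_d) :
  spans S -> exists p (s : 'I_p -> 'cV[R]_d), (forall i, S (s i)) /\
    forall y : 'rV[R]_d, (forall i, pairing y (s i) = 0) ->
      forall v, v \in l -> pairing y v = 0.
Proof.
move=> Sp; elim: l => [|v l [p [s [Ss Hs]]]].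
  by exists 0%N, (fun _ => 0); split => [[]|].
have [k [c [t [St ->]]]] := Sp v.
exists (p + k)%N, (fun i => match split i with inl a => s a | inr b => t b end).
split => [i|y Hy w]; first by case: (split i).
have Hs' : forall a, pairing y (s a) = 0.
  by move=> a; have := Hy (unsplit (inl a)); rewrite unsplitK.
have Ht' : forall b, pairing y (t b) = 0.
  by move=> b; have := Hy (unsplit (inr b)); rewrite unsplitK.
rewrite in_cons => /orP [/eqP ->|wl]; last exact: Hs Hs' _ wl.
by rewrite pairing_sumr big1 // => i _; rewrite Ht' mulr0.
Qed.

Lemma fam (R : realType) d (S : 'cV[R]_d -> Prop) :
  spans S -> exists p (s : 'I_p -> 'cV[R]_d), (forall i, S (s i)) /\
    forall y : 'rV[R]_d, (forall i, pairing y (s i) = 0) -> y = 0.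
Proof.
move=> Sp; have [p [s [Ss Hs]]] := fam_seq [seq delta_mx j 0 | j <- enum 'I_d] Sp.
exists p, s; split => // y Hy; apply/rowP => j; rewrite mxE.
have := Hs y Hy (delta_mx j 0) (map_f _ (mem_enum _ j)).
by rewrite /pairing -colE mxE.
Qed.

Definition phi (R : realType) d p (s : 'I_p -> 'cV[R]_d) (y : 'rV[R]_d) :=
  \sum_(i < p) pairing y (s i).

Lemma phiD (R : realType) d p (s : 'I_p -> 'cV[R]_d) a b :
  phi s (a + b) = phi s a + phi s b.
Proof. by rewrite /phi -big_split; apply: eq_bigr => i _; rewrite pairingD. Qed.

Lemma phiZ (R : realType) d p (s : 'I_p -> 'cV[R]_d) (c : R) a :
  phi s (c *: a) = c * phi s a.
Proof. by rewrite /phi mulr_sumr; apply: eq_bigr => i _; rewrite pairingZ. Qed.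

Lemma phiN (R : realType) d p (s : 'I_p -> 'cV[R]_d) a :
  phi s (- a) = - phi s a.
Proof. by rewrite -scaleN1r phiZ mulN1r. Qed.

Lemma phi_ge0 (R : realType) d (S : 'cV[R]_d -> Prop) p (s : 'I_p -> 'cV[R]_d) y :
  (forall i, S (s i)) -> in_dual_cone S y -> 0 <= phi s y.
Proof. by move=> Ss Ky; apply: sumr_ge0 => i _; apply: Ky; apply: in_cone1. Qed.

Lemma phi_eq0 (R : realType) d (S : 'cV[R]_d -> Prop) p (s : 'I_p -> 'cV[R]_d) y :
  (forall i, S (s i)) ->
  (forall y : 'rV[R]_d, (forall i, pairing y (s i) = 0) -> y = 0) ->
  in_dual_cone S y -> phi s y = 0 -> y = 0.
Proof.
move=> Ss Hs Ky /eqP; rewrite psumr_eq0 => [/allP H|i _]; last first.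
  by apply: Ky; apply: in_cone1.
by apply: Hs => i; apply/eqP; apply: H; rewrite mem_index_enum.
Qed.

Lemma neg_exists (R : realType) d p (s : 'I_p -> 'cV[R]_d) z :
  (forall y : 'rV[R]_d, (forall i, pairing y (s i) = 0) -> y = 0) ->
  z != 0 -> phi s z = 0 -> exists i, pairing z (s i) < 0.
Proof.
move=> Hs z0 pz.
have [/existsP [i Hi]|/existsPn Hall] := boolP [exists i, pairing z (s i) < 0].
  by exists i.
move/eqP: pz; rewrite psumr_eq0 => [/allP H|i _]; last by rewrite leNgt Hall.
by move: z0; rewrite (Hs z) ?eqxx // => i; apply/eqP; apply: H; rewrite mem_index_enum.
Qed.
Lemma boundary (R : realType) d (S : 'cV[R]_d -> Prop) h z s0 :
  in_dual_cone S h -> Fm S h z -> in_cone S s0 -> pairing z s0 < 0 ->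
  exists t0 : R, 0 < t0 /\ in_dual_cone S (h + t0 *: z) /\ ~ Fm S (h + t0 *: z) z.
Proof.
move=> Kh [c [c0 [K1 K2]]] Cs0 zs0.
pose E := fun t : R => 0 <= t /\ in_dual_cone S (h + t *: z).
have ubv : forall v, in_cone S v -> pairing z v < 0 ->
    ubound E (pairing h v / - pairing z v).
  move=> v Cv zv t [t0 Kt]; have := Kt v Cv; rewrite pairingD pairingZ => H.
  rewrite ler_pdivlMr ?oppr_gt0 // mulrN; lra.
have E0 : E 0 by split; rewrite // scale0r addr0.
have hs : has_sup E.
  by split; [exists 0 | exists (pairing h s0 / - pairing z s0); apply: ubv].
have Ec : E c^-1.
  split; first by rewrite invr_ge0 ltW.
  have -> : h + c^-1 *: z = c^-1 *: (c *: h + z).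
    by rewrite scalerDr scalerA mulVf ?gt_eqF // scale1r.
  by apply: KZ => //; rewrite invr_ge0 ltW.
have t0pos : 0 < sup E.
  have H := (sup_upper_bound hs) _ Ec; have := invr_gt0 c; rewrite c0 => H2; lra.
exists (sup E); split => //; split.
  move=> v Cv; rewrite pairingD pairingZ.
  have [zv|zv] := leP 0 (pairing z v).
    by apply: addr_ge0; [exact: Kh | exact: mulr_ge0 (ltW t0pos) zv].
  have := ge_sup (ex_intro _ 0 E0) (ubv v Cv zv).
  rewrite ler_pdivlMr ?oppr_gt0 // mulrN => H; have := Kh v Cv; lra.
move=> [e [e0 [K3 _]]].
have Ee : E (sup E + e^-1).
  split; first by apply: addr_ge0; [exact: ltW | rewrite invr_ge0 ltW].
  have -> : h + (sup E + e^-1) *: z = e^-1 *: (e *: (h + sup E *: z) + z).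
    by rewrite scalerDr scalerA mulVf ?gt_eqF // scale1r scalerDl addrA.
  by apply: KZ => //; rewrite invr_ge0 ltW.
have := (sup_upper_bound hs) _ Ee; have := invr_gt0 e; rewrite e0; lra.
Qed.
Lemma Fm_mono (R : realType) d (S : 'cV[R]_d -> Prop) h h1 h2 (a b e : R) y :
  in_dual_cone S h2 -> 0 < a -> 0 <= b -> 0 < e ->
  e *: h = a *: h1 + b *: h2 -> Fm S h1 y -> Fm S h y.
Proof.
move=> K2 a0 b0 e0 Heq [c [c0 [K3 K4]]]; exists (c * e / a).
split; first by rewrite divr_gt0 ?mulr_gt0.
have E : (c * e / a) *: h = c *: h1 + (c * b / a) *: h2.
  by rewrite (mulrAC c e) -(scalerA (c / a) e) Heq scalerDr !scalerA divfK ?gt_eqF // mulrAC.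
have cb : 0 <= c * b / a by rewrite divr_ge0 ?mulr_ge0 // ltW.
rewrite E; split; rewrite addrAC; apply: KD => //; exact: KZ.
Qed.

Definition bnd (R : realType) d (S : 'cV[R]_d -> Prop) h k :=
  forall p (M : 'M[R]_(p, d)), (forall i, Fm S h (row i M)) -> (\rank M < k)%N.

Lemma bnd_step (R : realType) d (S : 'cV[R]_d -> Prop) h h1 w k :
  in_dual_cone S h1 -> (forall y, Fm S h1 y -> Fm S h y) -> Fm S h w ->
  ~ Fm S h1 w -> bnd S h k.+1 -> bnd S h1 k.
Proof.
move=> K1 mono Fw nFw Hb p M HM.
have H2 := Hb _ (col_mx M w).
have H1 : (\rank M < \rank (col_mx M w))%N.
  apply: rank_ltmx; rewrite ltmxE; apply/andP; split.
    by rewrite -addsmxE addsmxSl.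
  rewrite col_mx_sub submx_refl /=; apply/negP => /(Fm_sub K1 HM) //.
rewrite ltnS in H2; apply: leq_trans H1 (H2 _) => i.
rewrite -(splitK i); case: (split i) => j /=.
  by rewrite rowKu; apply: mono.
rewrite rowKd.
by have -> : row j w = w by apply/rowP => l; rewrite mxE (ord1 j).
Qed.
Lemma main_ind (R : realType) d (S : 'cV[R]_d -> Prop) n (H : 'M[R]_(n, d)) :
  spans S ->
  (forall h, extreme_ray_dual S h -> exists i (c : R), 0 < c /\ h = c *: row i H) ->
  forall k h, in_dual_cone S h -> bnd S h k ->
  exists a : 'rV[R]_n, (forall j, 0 <= a 0 j) /\ h = a *m H.
Proof.
move=> Sp Hext; have [p [s [Ss Hs]]] := fam Sp.
elim=> [|k IH] h Kh Hb.
  have : (\rank (0%R : 'M[R]_(0, d)) < 0)%N by apply: Hb; case.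
  by [].
have [->|h0] := eqVneq h 0.
  by exists 0; split => [j|]; rewrite ?mxE ?mul0mx.
have ph : 0 < phi s h.
  rewrite lt_def (phi_ge0 Ss Kh) andbT; apply/eqP => /(phi_eq0 Ss Hs Kh) h00.
  by rewrite h00 eqxx in h0.
case: (pselect (forall x, Fm S h x -> exists al : R, x = al *: h)) => [Hx|Hnx].
  have : extreme_ray_dual S h.
    split => //; split => // a b Ka Kb hab.
    have Fa : Fm S h a.
      exists 1; rewrite scale1r; split => //; split.
        by rewrite {1}hab; apply: KD => //; apply: KD.
      by rewrite {1}hab addrAC subrr add0r.
    have [al Eal] := Hx a Fa.
    have Eb : b = (1 - al) *: h.
      by rewrite scalerBl scale1r {1}hab Eal addrAC subrr add0r.
    have pa := phi_ge0 Ss Ka; rewrite Eal phiZ in pa.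
    have pb := phi_ge0 Ss Kb; rewrite Eb phiZ in pb.
    exists al, (1 - al); split; first by rewrite -(pmulr_lge0 _ ph).
    by split; first by rewrite -(pmulr_lge0 _ ph).
  case/Hext => i [c [c0 ->]]; exists (c *: delta_mx 0 i); split.
    by move=> j; rewrite !mxE; apply: mulr_ge0; [exact: ltW | case: (_ && _)].
  by rewrite -scalemxAl -rowE.
have [x [Fx Nx]] : exists x, Fm S h x /\ ~ exists al : R, x = al *: h.
  apply: contrapT => N; apply: Hnx => x Fx; apply: contrapT => Nal; apply: N.
  by exists x.
pose z := x - (phi s x / phi s h) *: h.
have Fz : Fm S h z by apply: FmD Fx (FmN (FmZ _ Kh (Fmh Kh))).
have z0 : z != 0.
  by apply/eqP => /subr0_eq Ex; apply: Nx; exists (phi s x / phi s h).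
have pz : phi s z = 0 by rewrite /z phiD phiN phiZ divfK ?subrr // gt_eqF.
have [i zi] := neg_exists Hs z0 pz.
have [j zj] : exists j, pairing (- z) (s j) < 0.
  by apply: neg_exists Hs _ _; rewrite ?oppr_eq0 ?phiN ?pz ?oppr0.
have [t0 [t0p [K1 nF1]]] := boundary Kh Fz (in_cone1 (Ss i)) zi.
have [t1 [t1p [K2 nF2]]] := boundary Kh (FmN Fz) (in_cone1 (Ss j)) zj.
have Eq1 : (t0 + t1) *: h = t1 *: (h + t0 *: z) + t0 *: (h + t1 *: - z).
  by apply/matrixP => a b; rewrite !mxE; ring.
have Eq2 : (t0 + t1) *: h = t0 *: (h + t1 *: - z) + t1 *: (h + t0 *: z).
  by rewrite Eq1 addrC.
have tp : 0 < t0 + t1 by apply: addr_gt0.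
have [a1 [a1p Ha1]] := IH _ K1
  (bnd_step K1 (fun y Hy => Fm_mono K2 t1p (ltW t0p) tp Eq1 Hy) Fz nF1 Hb).
have [a2 [a2p Ha2]] := IH _ K2
  (bnd_step K2 (fun y Hy => Fm_mono K1 t0p (ltW t1p) tp Eq2 Hy) (FmN Fz) nF2 Hb).
exists ((t0 + t1)^-1 *: (t1 *: a1 + t0 *: a2)); split.
  move=> l; rewrite !mxE; apply: mulr_ge0; first by rewrite invr_ge0 ltW.
  by apply: addr_ge0; apply: mulr_ge0 => //; exact: ltW.
rewrite -scalemxAl mulmxDl -!scalemxAl -Ha1 -Ha2 -Eq1 scalerA mulVf ?gt_eqF //.
by rewrite scale1r.
Qed.
Lemma dual_gen (R : realType) d (S : 'cV[R]_d -> Prop) n (H : 'M[R]_(n, d)) h :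
  spans S -> facet_map S H -> in_dual_cone S h ->
  exists a : 'rV[R]_n, (forall j, 0 <= a 0 j) /\ h = a *m H.
Proof.
move=> Sp [_ [_ F3]] Kh; apply: (main_ind Sp F3 (k := d.+1) Kh) => p M _.
by rewrite ltnS rank_leq_col.
Qed.

Lemma rows_factor (R : realType) d (S : 'cV[R]_d -> Prop) n (H : 'M[R]_(n, d))
    k (t : 'M[R]_(k, d)) :
  spans S -> facet_map S H -> (forall s, S s -> forall l, 0 <= (t *m s) l 0) ->
  exists sg : 'M[R]_(k, n), (forall i j, 0 <= sg i j) /\ t = sg *m H.
Proof.
move=> Sp FH Ht.
have : forall l, exists a : 'rV[R]_n, (forall j, 0 <= a 0 j) /\ row l t = a *m H.
  move=> l; apply: dual_gen Sp FH _; apply: K_gen => s Ss.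
  by rewrite /pairing -row_mul mxE; exact: Ht.
case/fin_all_exists => f Hf.
exists (\matrix_(l, j) f l 0 j); split => [i j|]; first by rewrite mxE; case: (Hf i).
apply/row_matrixP => l; rewrite row_mul; case: (Hf l) => _ ->.
by congr (_ *m _); apply/rowP => j; rewrite !mxE.
Qed.

Theorem mainTheorem1 (R : realType) (dO dE : nat)
    (Om : 'cV[R]_dO -> Prop) (Ef : 'cV[R]_dE -> Prop)
    (B : 'M[R]_(dE, dO)) (u : 'cV[R]_dE)
    (n m : nat) (HO : 'M[R]_(n, dO)) (HE : 'M[R]_(m, dE)) :
  accessible_fragment Om Ef B u ->
  facet_map Om HO -> facet_map Ef HE ->
  (simplicial_cone_embedding Om Ef B <->
   exists sigma : 'M[R]_(m, n),
     (forall i j, 0 <= sigma i j) /\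
     (forall (w : 'cV[R]_dE) (v : 'cV[R]_dO),
        bil B w v = ((HE *m w)^T *m sigma *m (HO *m v)) 0 0)).
Proof.
move=> [SpO [SpE _]] FO FE; split.
  case=> k [tO [tE [HtO [HtE Hb]]]].
  have [sO [sO0 EO]] := rows_factor SpO FO HtO.
  have [sE [sE0 EE]] := rows_factor SpE FE HtE.
  exists (sE^T *m sO); split.
    move=> i j; rewrite mxE; apply: sumr_ge0 => l _; rewrite mxE.
    exact: mulr_ge0 (sE0 _ _) (sO0 _ _).
  move=> w v; rewrite Hb.
  have -> : \sum_(l < k) (tE *m w) l 0 * (tO *m v) l 0
      = ((tE *m w)^T *m (tO *m v)) 0 0.
    rewrite [RHS]mxE; apply: eq_bigr => l _; rewrite [in RHS]mxE. reflexivity.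
  by rewrite EO EE !trmx_mul !mulmxA.
case=> sg [sg0 Hsg]; exists m, (sg *m HO), HE; split; [|split].
- move=> s Os l; rewrite -mulmxA mxE; apply: sumr_ge0 => j _.
  apply: mulr_ge0 => //.
  by have := (FO.1 j).1 s (in_cone1 Os); rewrite /pairing -row_mul mxE.
- move=> e Ee l.
  by have := (FE.1 l).1 e (in_cone1 Ee); rewrite /pairing -row_mul mxE.
- move=> w v; rewrite Hsg -!mulmxA mxE; apply: eq_bigr => l _; rewrite mxE.
  by [].
Qed.
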